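(* Let $n\geq 2$, $1\leq k\leq n-1$, $w=w_1\cdots w_n\in\mathfrak{S}_n$, and let $i<j$ with $w_i\cdots w_j$ a $k$-up. Let $i\leq i'<j'\leq j$ be such that $w_{i'}\cdots w_{j'}$ is a $k$-up with $j'-i'$ minimal among all $k$-ups $w_{a}\cdots w_{b}$ with $i\le a<b\le j$. Then $w_{i'}\cdots w_{j'}$ is a $k$-ascending section.
   Context: $\mathfrak{S}_n$ is the set of permutations $w=w_1\cdots w_n$ of $\{1,\dots,n\}$. A section of $w$ is a consecutive block $w_sw_{s+1}\cdots w_t$ ($s\le t$). A section $w_s\cdots w_t$ is a $k$-up if $s<t$ and $w_t-w_s\geq k$, and a $k$-down if $s<t$ and $w_s-w_t\geq k$. A $k$-down ''in'' the section $w_a\cdots w_b$ means a $k$-down $w_s\cdots w_t$ with $a\leq s<t\leq b$. A section $w_i\cdots w_j$ with $i<j$ is $k$-ascending if: $w_i=\min\{w_i,\dots,w_j\}$ and $w_j=\max\{w_i,\dots,w_j\}$; $w_j-w_i\geq k$; and there is no $k$-down in $w_i\cdots w_j$. *)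

(* Defs.v *)
From mathcomp Require Import all_boot all_order all_fingroup.
Set Implicit Arguments. Unset Strict Implicit. Unset Printing Implicit Defensive.

(* Permutations of {1..n} are represented as w : 'S_n, permutations of 'I_n
   = {0,..,n-1}; positions and values are shifted by one (0-indexed), which
   does not affect differences w_t - w_s. *)

Definition wv n (w : 'S_n) (i : 'I_n) : nat := val (w i).

Definition kup n (k : nat) (w : 'S_n) (s t : 'I_n) : Prop :=
  (s < t)%N /\ (wv w s + k <= wv w t)%N.

Definition kdown n (k : nat) (w : 'S_n) (s t : 'I_n) : Prop :=
  (s < t)%N /\ (wv w t + k <= wv w s)%N.

Definition kascending n (k : nat) (w : 'S_n) (i j : 'I_n) : Prop :=
  (i < j)%N /\
  (forall l : 'I_n, (i <= l <= j)%N -> wv w i <= wv w l <= wv w j)%N /\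
  (wv w i + k <= wv w j)%N /\
  ~ (exists s t : 'I_n, [/\ (i <= s)%N, (t <= j)%N & kdown k w s t]).

(* Main.v *)
Require Import Defs.
From mathcomp Require Import all_boot all_order all_fingroup.
From mathcomp Require Import zify.

Theorem lemma2p5 (n k : nat) (w : 'S_n) (i j i' j' : 'I_n) :
  (2 <= n)%N -> (1 <= k)%N -> (k <= n - 1)%N ->
  (i < j)%N -> kup k w i j ->
  (i <= i')%N -> (i' < j')%N -> (j' <= j)%N -> kup k w i' j' ->
  (forall a b : 'I_n, (i <= a)%N -> (a < b)%N -> (b <= j)%N -> kup k w a b ->
     (j' - i' <= b - a)%N) ->
  kascending k w i' j'.
Proof.
move=> _ hk _ _ _ hii' hij' hjj' [_ hup] hmin.
have lo : forall l : 'I_n, (i' <= l <= j')%N -> (wv w i' <= wv w l)%N.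
  move=> l /andP[h1 h2]; rewrite leqNgt; apply/negP => hlt.
  have hl : (l < j')%N.
    case: (eqVneq l j') => [e|ne]; first by move: hlt; rewrite e; lia.
    have : nat_of_ord l <> nat_of_ord j' by move=> e; move/eqP: ne; apply; apply: val_inj.
    lia.
  have ha : (i <= l)%N by lia.
  have hb : (wv w l + k <= wv w j')%N by lia.
  have := hmin l j' ha hl hjj' (conj hl hb).
  have : (i' != l) by apply/eqP => e; move: hlt; rewrite e ltnn.
  move=> /eqP hne; have : nat_of_ord i' <> nat_of_ord l by move=> e; apply: hne; apply: val_inj.
  lia.
have hi : forall l : 'I_n, (i' <= l <= j')%N -> (wv w l <= wv w j')%N.
  move=> l /andP[h1 h2]; rewrite leqNgt; apply/negP => hlt.
  have hl : (i' < l)%N.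
    case: (eqVneq l i') => [e|ne]; first by move: hlt; rewrite e; lia.
    have : nat_of_ord l <> nat_of_ord i' by move=> e; move/eqP: ne; apply; apply: val_inj.
    lia.
  have ha : (l <= j)%N by lia.
  have hb : (wv w i' + k <= wv w l)%N by lia.
  have := hmin i' l hii' hl ha (conj hl hb).
  have : (l != j') by apply/eqP => e; move: hlt; rewrite e ltnn.
  move=> /eqP hne; have : nat_of_ord l <> nat_of_ord j' by move=> e; apply: hne; apply: val_inj.
  lia.
split => //; split; first by move=> l hl; rewrite lo // hi.
split => //.
move=> [s [t [h1 h2 [hst hd]]]].
have hs : (i' < s)%N.
  case: (eqVneq s i') => [e|ne]; first by move: hd; rewrite e; have := lo t; lia.
  have : nat_of_ord s <> nat_of_ord i' by move=> e; move/eqP: ne; apply; apply: val_inj.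
  lia.
have ha : (s <= j)%N by lia.
have ht : (wv w i' <= wv w t)%N by apply: lo; lia.
have hb : (wv w i' + k <= wv w s)%N by lia.
have := hmin i' s hii' hs ha (conj hs hb).
lia.
Qed.
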